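(* Let $\kappa\ge1$ and $\alpha_1,\alpha_2\in\mathcal{A}(\kappa)$. Then $(\alpha_1\circledast_\kappa\alpha_2)(0)=\alpha_1(0)\alpha_2(0)+\sum_{l=1}^\infty(\kappa+1)\kappa^{l-1}\alpha_1(l)\alpha_2(l)$; $(\alpha_1\circledast_\kappa\alpha_2)(1)=\sum_{l=0}^\infty\kappa^l[\alpha_1(l)\alpha_2(l+1)+\alpha_1(l+1)\alpha_2(l)]$; and for $n\ge2$, $$(\alpha_1\circledast_\kappa\alpha_2)(n)=\sum_{l=0}^\infty\kappa^l[\alpha_1(l)\alpha_2(l+n)+\alpha_1(l+n)\alpha_2(l)]+\sum_{i=1}^{n-1}\alpha_1(i)\alpha_2(n-i)+\sum_{i=1}^{n-1}\sum_{l=1}^\infty(\kappa-1)\kappa^{l-1}\alpha_1(l+i)\alpha_2(l+n-i).$$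
   Context: $\mathrm{T}_\kappa=(V_\kappa,E_\kappa)$ is the Cayley tree of order $\kappa$ (infinite connected acyclic graph, every vertex of degree $\kappa+1$), $d$ its graph distance. $\mathcal{A}(\kappa)$ is the set of functions $\alpha:\mathbb{N}_0\to\mathbb{C}$ such that the kernel $T_\alpha(x,y)=\alpha(d(x,y))$ defines a bounded operator on $\ell^2(V_\kappa)$. Fix a sequence $(v_n)_{n\ge0}$ in $V_\kappa$ with $d(v_k,v_n)=|k-n|$ for all $k,n\ge0$; for $\alpha_1,\alpha_2\in\mathcal{A}(\kappa)$ define $(\alpha_1\circledast_\kappa\alpha_2)(n)=\sum_{x\in V_\kappa}\alpha_1(d(v_0,x))\alpha_2(d(x,v_n))$ for $n\ge0$ (this series converges and does not depend on the choice of $(v_n)$). *)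

(* Defs.v *)
From HB Require Import structures.
From mathcomp Require Import all_boot all_order all_algebra.
From mathcomp Require Import complex.
From mathcomp Require Import reals.
Set Implicit Arguments. Unset Strict Implicit. Unset Printing Implicit Defensive.
Import Order.TTheory GRing.Theory Num.Theory.
Local Open Scope ring_scope.

(** * The Cayley tree T_kappa (every vertex of degree kappa+1).
    Concrete model: a vertex is the path from a fixed root, i.e. a finite
    sequence [a_0; a_1; ...; a_k] with a_0 < kappa+1 and a_i < kappa (i >= 1).  The root [::] has kappa+1 neighbours, every other
    vertex has one parent and kappa children, and the graph is a tree. *)
Definition valid_vertex (kappa : nat) (s : seq nat) : bool :=
  match s with
  | [::] => true
  | a :: t => (a < kappa.+1)%N && all (fun b => (b < kappa)%N) t
  end.

Definition vertex (kappa : nat) := {s : seq nat | valid_vertex kappa s}.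

(** adjacency in T_kappa (for documentation; the distance below is the
    graph distance of this tree) *)
Definition tadj (kappa : nat) (x y : vertex kappa) : Prop :=
  (exists b, val y = rcons (val x) b) \/ (exists b, val x = rcons (val y) b).

Fixpoint lcp (s t : seq nat) : nat :=
  match s, t with
  | a :: s', b :: t' => if a == b then (lcp s' t').+1 else 0%N
  | _, _ => 0%N
  end.

(** graph distance in the tree: go up to the last common ancestor and down *)
Definition tdist (kappa : nat) (x y : vertex kappa) : nat :=
  (size (val x) + size (val y) - 2 * lcp (val x) (val y))%N.

Section Analysis.
Variable R : realType.
Local Notation C := R[i].

(** The kernel T_alpha(x,y) = alpha(d(x,y)) defines a bounded operator on
    l^2(V_kappa): there is M with ||T_alpha f||^2 <= M ||f||^2 for every
    finitely supported f (support in the finite set S), where ||T_alpha f||^2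
    is the supremum over finite sets S' of sum_{x in S'} |(T_alpha f)(x)|^2. *)
Definition in_A (kappa : nat) (alpha : nat -> C) : Prop :=
  exists M : R, forall (S S' : seq (vertex kappa)) (f : vertex kappa -> C),
    uniq S -> uniq S' ->
    \sum_(x <- S') `| \sum_(y <- S) alpha (tdist x y) * f y | ^+ 2
      <= (M%:C)%C * \sum_(y <- S) `| f y | ^+ 2.

(** unordered (order independent) summation of a family over the vertices:
    the net of finite partial sums converges to s *)
Definition has_usum (kappa : nat) (F : vertex kappa -> C) (s : C) : Prop :=
  forall e : R, 0 < e -> exists F0 : seq (vertex kappa),
    forall Fs : seq (vertex kappa), uniq Fs -> {subset F0 <= Fs} ->
      `| \sum_(x <- Fs) F x - s | < (e%:C)%C.

Definition series_to (u : nat -> C) (s : C) : Prop :=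
  forall e : R, 0 < e -> exists N : nat, forall m : nat, (N <= m)%N ->
    `| \sum_(0 <= l < m) u l - s | < (e%:C)%C.

End Analysis.

(* Main.v *)
Require Import Defs.
From HB Require Import structures.
From mathcomp Require Import all_boot all_order all_algebra.
From mathcomp Require Import complex.
From mathcomp Require Import reals.
From mathcomp Require Import classical_sets.
From mathcomp Require Import zify ring lra.
Set Implicit Arguments. Unset Strict Implicit. Unset Printing Implicit Defensive.
Import Order.TTheory GRing.Theory Num.Theory.

(* Proof strategy: the concrete Cayley tree is mapped
   isometrically onto reduced words over kappa+1 letters, then translated so
   that v 0 becomes the root; there the vertices are classified by
   (lcp with the image of v n, height), the class sizes are counted exactly,
   and absolute summability comes from the in_A hypothesis. *)

Section Words.
Variable K : nat.

Fixpoint red (p : nat) (s : seq nat) : bool :=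
  match s with
  | [::] => true
  | b :: t => [&& b < K, b != p & red b t]
  end.

Definition cons_red (a : nat) (z : seq nat) : seq nat :=
  match z with
  | b :: t => if a == b then t else a :: z
  | [::] => [:: a]
  end.

Definition tau (g z : seq nat) := foldl (fun z a => cons_red a z) z g.

Definition wd (s t : seq nat) := (size s + size t - 2 * lcp s t)%N.

Lemma lcp_le s t : (lcp s t <= size s)%N /\ (lcp s t <= size t)%N.
Proof.
elim: s t => [|a s IH] [|b t] //=. case: eqP => _ //. have := IH t. lia.
Qed.

Lemma lcp_nil s : lcp s [::] = 0%N. Proof. by case: s. Qed.

Lemma lcpC s t : lcp s t = lcp t s.
Proof. elim: s t => [|a s IH] [|b t] //=. by rewrite eq_sym IH. Qed.

Lemma red_K p t : red p t -> red K t.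
Proof. case: t => //= b t /and3P [h1 h2 h3]. rewrite h1 h3 /= andbT. by rewrite neq_ltn h1. Qed.

Lemma red_cons_red a x : a < K -> red K x -> red K (cons_red a x).
Proof.
move=> ha. case: x => [|b t] /=. by rewrite ha neq_ltn ha.
move=> /and3P [hb _ ht]. case: eqP => [_|hab]. exact: red_K ht.
rewrite /= ha hb ht neq_ltn ha /= andbT. by apply/eqP => e; apply: hab.
Qed.

Lemma cons_redK a x : a < K -> red K x -> cons_red a (cons_red a x) = x.
Proof.
move=> ha. case: x => [|b t] /=. by rewrite eqxx.
move=> /and3P [hb _ ht]. case: eqP => [->|hab] /=.
  case: t ht => [|c t] //= /and3P [_ hc _]. by rewrite eq_sym (negbTE hc).
by rewrite eqxx.
Qed.


Lemma lcp_red0 a t y : red a t -> lcp t (a :: y) = 0%N.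
Proof. case: t => [|c t] //= /and3P [_ h _]. by rewrite (negbTE h). Qed.

Lemma lcp1 a t : red a t -> lcp [:: a] t = 0%N.
Proof. case: t => [|c t] //= /and3P [_ h _]. by rewrite eq_sym (negbTE h). Qed.

Lemma wd_cons_red a x y : a < K -> red K x -> red K y ->
  wd (cons_red a x) (cons_red a y) = wd x y.
Proof.
move=> ha. rewrite /wd.
case: x => [|b x]; case: y => [|c y].
- by rewrite /= eqxx /=; lia.
- move=> _ /and3P [_ _ hy]. case: (eqVneq a c) => [e|hac].
  + subst c. rewrite /= eqxx. move: (lcp1 hy) => /= ->. lia.
  + rewrite /= (negbTE hac) /= ?eqxx ?(negbTE hac). lia.
- move=> /and3P [_ _ hx] _. case: (eqVneq a b) => [e|hab].
  + subst b. rewrite /= eqxx. rewrite lcpC; move: (lcp1 hx) => /= ->. lia.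
  + rewrite /= (negbTE hab) /= ?eqxx ?lcp_nil. lia.
- move=> /and3P [_ _ hx] /and3P [_ _ hy].
  case: (eqVneq a b) => [e|hab]; case: (eqVneq a c) => [e'|hac].
  + subst. rewrite /= !eqxx. have := lcp_le x y. lia.
  + subst. have hca : (c == b) = false by rewrite eq_sym (negbTE hac).
    rewrite /= eqxx (negbTE hac) lcp_red0 //=. lia.
  + subst. have hca : (b == c) = false by rewrite eq_sym (negbTE hab).
    rewrite /= eqxx ?(negbTE hab) ?hca lcpC lcp_red0 //=. lia.
  + rewrite /= (negbTE hab) (negbTE hac) /= eqxx.
    case: (eqVneq b c) => [e|hbc]; [subst; rewrite /= ?eqxx | rewrite /= ?(negbTE hbc)]; have := lcp_le x y; lia.
Qed.

Lemma tau_red g x : all (fun a => a < K) g -> red K x -> red K (tau g x).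
Proof.
elim: g x => [|a g IH] x //= /andP [ha hg] hx. apply: IH => //. exact: red_cons_red.
Qed.

Lemma wd_tau g x y : all (fun a => a < K) g -> red K x -> red K y ->
  wd (tau g x) (tau g y) = wd x y.
Proof.
elim: g x y => [|a g IH] x y //= /andP [ha hg] hx hy.
rewrite IH ?red_cons_red //. exact: wd_cons_red.
Qed.

Lemma tau_self g : tau g g = [::].
Proof. elim: g => [|a g IH] //=. by rewrite eqxx. Qed.

Lemma tauK g x : all (fun a => a < K) g -> red K x -> tau (rev g) (tau g x) = x.
Proof.
elim: g x => [|a g IH] x //= /andP [ha hg] hx.
rewrite rev_cons /tau foldl_rcons -/(tau _ _) IH ?red_cons_red //. exact: cons_redK.
Qed.

Lemma red_all p s : red p s -> all (fun a => a < K) s.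
Proof. elim: s p => [|b s IH] p //= /and3P [h1 _ h3]. by rewrite h1 (IH b). Qed.

End Words.

Definition fenc (p a : nat) := if a < p then a else a.+1.
Definition fdec (p b : nat) := if b < p then b else b.-1.

Fixpoint enc (p : nat) (s : seq nat) : seq nat :=
  match s with [::] => [::] | a :: t => fenc p a :: enc (fenc p a) t end.
Fixpoint dec (p : nat) (s : seq nat) : seq nat :=
  match s with [::] => [::] | b :: t => fdec p b :: dec b t end.

Lemma size_enc p s : size (enc p s) = size s.
Proof. by elim: s p => [|a s IH] p //=; rewrite IH. Qed.

Lemma fenc_inj p : injective (fenc p).
Proof. move=> a b; rewrite /fenc; case: ifP; case: ifP; lia. Qed.

Lemma lcp_enc p s t : lcp (enc p s) (enc p t) = lcp s t.
Proof.
elim: s p t => [|a s IH] p [|b t] //=.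
case: (eqVneq a b) => [<-|hab]; first by rewrite !eqxx IH.
rewrite ?(negbTE hab). case: eqP => // /fenc_inj e. by rewrite e eqxx in hab.
Qed.

Lemma decK p s : dec p (enc p s) = s.
Proof.
elim: s p => [|a s IH] p //=. rewrite IH. congr (_ :: _).
rewrite /fdec /fenc. case: ifP; case: ifP; lia.
Qed.

Lemma encK K p t : red K p t -> enc p (dec p t) = t.
Proof.
elim: t p => [|b t IH] p //= /and3P [_ hbp ht].
have e : fenc p (fdec p b) = b.
  move: hbp; rewrite /fenc /fdec. case: ifP; case: ifP => /=; lia.
by rewrite e IH.
Qed.

Section Kap.
Variable kappa : nat.
Local Notation K := kappa.+1.

Lemma red_enc_aux p t : p < K -> all (fun b => b < kappa) t -> red K p (enc p t).
Proof.
elim: t p => [|a t IH] p //= hp /andP [ha ht].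
have h1 : fenc p a < K by rewrite /fenc; case: ifP; lia.
rewrite h1 /= IH // andbT. rewrite /fenc; case: ifP; lia.
Qed.

Lemma red_enc s : valid_vertex kappa s -> red K K (enc K s).
Proof.
case: s => [|a t] //= /andP [ha ht].
rewrite /fenc ha /= ha /= neq_ltn ha /=. exact: red_enc_aux.
Qed.

Lemma valid_dec_aux p t : p < K -> red K p t -> all (fun b => b < kappa) (dec p t).
Proof.
elim: t p => [|b t IH] p //= hp /and3P [hb hbp ht].
rewrite (IH b) // andbT. move: hbp; rewrite /fdec. case: ifP; lia.
Qed.

Lemma valid_dec t : red K K t -> valid_vertex kappa (dec K t).
Proof.
case: t => [|b t] //= /and3P [hb _ ht].
rewrite /fdec hb hb /=. exact: valid_dec_aux.
Qed.

Variable v0 : vertex kappa.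
Definition gg := enc K (val v0).
Definition phi (x : vertex kappa) := tau gg (enc K (val x)).
Definition psi (z : seq nat) : vertex kappa := insubd v0 (dec K (tau (rev gg) z)).

Lemma gg_all : all (fun a => a < K) gg.
Proof. apply: (@red_all K K). apply: red_enc. exact: valP. Qed.

Lemma red_phi x : red K K (phi x).
Proof. apply: tau_red; first exact: gg_all. apply: red_enc. exact: valP. Qed.

Lemma tdist_phi x y : tdist x y = wd (phi x) (phi y).
Proof.
rewrite /phi (@wd_tau K) ?gg_all ?red_enc ?valP //.
by rewrite /wd /tdist !size_enc lcp_enc.
Qed.

Lemma phi_v0 : phi v0 = [::].
Proof. exact: tau_self. Qed.

Lemma phi_psi z : red K K z -> phi (psi z) = z.
Proof.
move=> hz.
have hr : red K K (tau (rev gg) z) by apply: tau_red => //; rewrite all_rev gg_all.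
rewrite /phi /psi insubdK; last exact: valid_dec.
rewrite (encK hr).
have := @tauK K (rev gg) z. rewrite revK. apply => //. by rewrite all_rev gg_all.
Qed.

Lemma phi_inj : injective phi.
Proof.
move=> x y e.
have : tau (rev gg) (phi x) = tau (rev gg) (phi y) by rewrite e.
rewrite /phi !(@tauK K) ?gg_all ?red_enc ?valP // => /(congr1 (dec K)).
rewrite !decK. exact: val_inj.
Qed.

Lemma size_phi x : size (phi x) = tdist v0 x.
Proof. rewrite tdist_phi phi_v0 /wd /=. lia. Qed.

End Kap.

Lemma lcp_cat s y t : lcp (s ++ y) (s ++ t) = (size s + lcp y t)%N.
Proof. elim: s => [|a s IH] //=. by rewrite eqxx IH. Qed.

Lemma lcp_take s t : take (lcp s t) s = take (lcp s t) t.
Proof.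
elim: s t => [|a s IH] [|b t] //=. case: eqP => [->|] //=. by rewrite IH.
Qed.

Lemma lcp_nth x0 s t : (lcp s t < size s)%N -> (lcp s t < size t)%N ->
  nth x0 s (lcp s t) != nth x0 t (lcp s t).
Proof.
elim: s t => [|a s IH] [|b t] //=. case: (eqVneq a b) => [<-|hab] /=.
- exact: IH.
- by [].
Qed.

Lemma last_take x0 (w : seq nat) j : (j < size w)%N -> last x0 (take j.+1 w) = nth x0 w j.
Proof.
elim: w x0 j => [|a w IH] x0 [|j] //=.
- by rewrite take0.
- move=> h. rewrite IH //. exact: set_nth_default.
Qed.

Lemma mem_flatten_uniq (S T : eqType) (f : S -> seq T) (s : seq S) :
  uniq s -> (forall x, x \in s -> uniq (f x)) ->
  (forall x y z, x \in s -> y \in s -> z \in f x -> z \in f y -> x = y) ->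
  uniq (flatten [seq f x | x <- s]).
Proof.
elim: s => [|a s IH] //= /andP [has hs] hu hd.
rewrite cat_uniq (hu a (mem_head _ _)) /=.
rewrite IH //; first last.
- move=> x y z hx hy; apply: hd; by rewrite in_cons ?hx ?hy orbT.
- move=> x hx; apply: hu; by rewrite in_cons hx orbT.
rewrite andbT. apply/hasPn => z /flatten_mapP [x hx hzx]. apply/negP => hza.
have hx' : x \in a :: s by rewrite in_cons hx orbT.
have e := hd a x z (mem_head _ _) hx' hza hzx.
by rewrite e hx in has.
Qed.

Lemma mem_consmap (b : nat) y (s : seq (seq nat)) b0 :
  (b :: y \in [seq b0 :: x | x <- s]) = (b == b0) && (y \in s).
Proof.
elim: s => [|x s IH] /=; first by rewrite andbF.
by rewrite in_cons IH eqseq_cons andb_orr.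
Qed.

Section W3.
Variable K : nat.

Definition letters (p c : nat) := [seq b <- iota 0 K | (b != p) && (b != c)].

Fixpoint ext (p c r : nat) : seq (seq nat) :=
  match r with
  | 0 => [:: [::]]
  | r'.+1 => flatten [seq [seq b :: y | y <- ext b K r'] | b <- letters p c]
  end.

Definition hdok (c : nat) (y : seq nat) := if y is b :: _ then b != c else true.

Lemma red_hdok p y : red K p y -> hdok K y.
Proof. case: y => [|b y] //= /and3P [h _ _]. by rewrite neq_ltn h. Qed.

Lemma mem_ext p c r y :
  (y \in ext p c r) = [&& red K p y, size y == r & hdok c y].
Proof.
elim: r p c y => [|r IH] p c [|b y] //=.
- by rewrite in_cons orbF andbF.
- apply/negbTE/flatten_mapP. case. move=> x _. by case/mapP.
- apply/idP/idP.
  + case/flatten_mapP => b0. rewrite mem_filter mem_iota /= => /andP [/andP [h1 h2] h3].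
    rewrite mem_consmap => /andP [/eqP e]. subst b0.
    rewrite IH => /and3P [h4 h5 _]. by rewrite h3 h1 h2 h4 /= eqSS h5.
  + case/and3P => /and3P [h1 h2 h3]; rewrite eqSS => h4 h5. apply/flatten_mapP. exists b.
      by rewrite mem_filter mem_iota /= h1 h2 h5.
    rewrite mem_consmap eqxx /= IH h3 h4 /=. exact: red_hdok h3.
Qed.

Lemma uniq_ext p c r : uniq (ext p c r).
Proof.
elim: r p c => [|r IH] p c //=. apply: mem_flatten_uniq.
- apply: filter_uniq. exact: iota_uniq.
- move=> x _. rewrite map_inj_uniq //. by move=> ? ? [].
- move=> x y z _ _ /mapP [u _ ->] /mapP [v _ []] //.
Qed.

Lemma size_flatten_cons (L : seq nat) (f : nat -> seq (seq nat)) m :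
  (forall b, b \in L -> size (f b) = m) ->
  size (flatten [seq [seq b :: y | y <- f b] | b <- L]) = (size L * m)%N.
Proof.
elim: L => [|a L IH] //= h. rewrite size_cat size_map h ?mem_head // IH //.
move=> b hb; apply: h; by rewrite in_cons hb orbT.
Qed.

Lemma size_letters p c : size (letters p c) =
  (K - (p < K) - ((c < K) && (c != p)))%N.
Proof.
rewrite size_filter.
have h := count_predC (fun b => (b != p) && (b != c)) (iota 0 K).
have h2 := count_predUI (pred1 p) (pred1 c) (iota 0 K).
have e1 : count (predC (fun b => (b != p) && (b != c))) (iota 0 K) =
          count (predU (pred1 p) (pred1 c)) (iota 0 K).
  apply: eq_count => b /=. by rewrite negb_and !negbK.
have ep : count (pred1 p) (iota 0 K) = (p < K) by rewrite count_uniq_mem ?iota_uniq // mem_iota.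
have ec : count (pred1 c) (iota 0 K) = (c < K) by rewrite count_uniq_mem ?iota_uniq // mem_iota.
have ei : count (predI (pred1 p) (pred1 c)) (iota 0 K) = ((c < K) && (c == p)).
  case: (eqVneq c p) => [->|hcp].
    rewrite andbT -ep. apply: eq_count => b /=. by rewrite andbb.
  rewrite andbF. apply/eqP; rewrite -leqn0 leqNgt -has_count. apply/hasP => [[b _ /=]].
  case/andP => /eqP -> /eqP e. by rewrite e eqxx in hcp.
rewrite size_iota in h. rewrite ep ec ei e1 in h h2.
case: (c < K) (p < K) (c == p) h h2 => [] [] [] /=; lia.
Qed.

Lemma size_ext0 p c : size (ext p c 0) = 1%N. Proof. by []. Qed.

Lemma size_extK b r : (b < K)%N -> size (ext b K r) = (K.-1 ^ r)%N.
Proof.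
elim: r b => [|r IH] b hb //=. rewrite (@size_flatten_cons _ _ (K.-1 ^ r)).
  rewrite size_letters hb ltnn /= expnS. lia.
move=> x; rewrite mem_filter mem_iota /= => /andP [_ hx]. exact: IH.
Qed.

Lemma size_extS p c r : size (ext p c r.+1) = (size (letters p c) * K.-1 ^ r)%N.
Proof.
rewrite /= (@size_flatten_cons _ _ (K.-1 ^ r)) //.
move=> x; rewrite mem_filter mem_iota /= => /andP [_ hx]. exact: size_extK.
Qed.

Lemma nth_red_lt p t j : red K p t -> (j < size t)%N -> (nth K t j < K)%N.
Proof.
elim: t p j => [|a t IH] p [|j] //= /and3P [h1 _ h3] hj //.
exact: (IH a).
Qed.

Lemma nth_red_neq p t j : red K p t -> (j.+1 < size t)%N -> nth K t j.+1 != nth K t j.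
Proof.
elim: t p j => [|a t IH] p [|j] //=.
- case: t {IH} => [|b t] //= /and3P [_ _ /and3P [_ h _]] _. exact: h.
- move=> /and3P [_ _ h3] hj. exact: (IH a).
Qed.

Variable w : seq nat.
Hypothesis hw : red K K w.
Local Notation n := (size w).

Definition lastp j := if j is j'.+1 then nth K w j' else K.
Definition cw j := nth K w j.
Definition cls j r := [seq take j w ++ y | y <- ext (lastp j) (cw j) r].
Definition Hj j m := flatten [seq cls j r | r <- iota 0 m].
Definition H m := flatten [seq Hj j m | j <- iota 0 n.+1].
Definition ht z := (size z - lcp z w)%N.

Lemma red_cat p s t : red K p (s ++ t) = red K p s && red K (last p s) t.
Proof. elim: s p => [|a s IH] p //=. by rewrite IH !andbA. Qed.

Lemma last_take_lastp j : (j <= n)%N -> last K (take j w) = lastp j.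
Proof. case: j => [|j] h; first by rewrite take0. exact: last_take. Qed.

Lemma red_take j : red K K (take j w).
Proof. move: hw. rewrite -{1}(cat_take_drop j w) red_cat. by case/andP. Qed.

Lemma lcp_hd c y t : hdok c y -> lcp y (c :: t) = 0%N.
Proof. case: y => [|b y] //= h. by rewrite (negbTE h). Qed.

Lemma cls_props j r z : (j <= n)%N -> z \in cls j r ->
  [/\ red K K z, size z = (j + r)%N & lcp z w = j].
Proof.
move=> hj /mapP [y]. rewrite mem_ext => /and3P [h1 /eqP h2 h3] ->.
split.
- by rewrite red_cat red_take last_take_lastp.
- rewrite size_cat size_take h2. case: (ltnP j n) => hh //.
  by rewrite (_ : j = n) //; apply/anti_leq; rewrite hj hh.
- rewrite -{2}(cat_take_drop j w) lcp_cat size_take.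
  case: (ltnP j n) => hjn.
  + by rewrite (drop_nth K hjn) lcp_hd // addn0.
  + have -> : j = n by lia. by rewrite drop_size lcp_nil addn0.
Qed.

Lemma cls_complete z : red K K z -> z \in cls (lcp z w) (ht z).
Proof.
move=> hz. set j := lcp z w.
have hjn : (j <= n)%N by have := lcp_le z w; lia.
have hjz : (j <= size z)%N by have := lcp_le z w; lia.
have ez : z = take j w ++ drop j z by rewrite -lcp_take cat_take_drop.
rewrite {1}ez /cls. apply: map_f. rewrite mem_ext size_drop /ht eqxx /=.
move: hz; rewrite {1}ez red_cat last_take_lastp // => /andP [_ hy].
rewrite hy /=.
case ey: (drop j z) => [|b y] //=.
have hb : b = nth K z j by rewrite -[j]addn0 -nth_drop ey.
have hjz' : (j < size z)%N.
  move: (congr1 size ey); rewrite size_drop /=; lia.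
rewrite /cw hb. case: (ltnP j n) => hjn'.
- exact: lcp_nth.
- rewrite (nth_default K hjn'). move: hy. rewrite ey /= => /and3P [h _ _].
  by rewrite -hb neq_ltn h.
Qed.

Lemma mem_H m z : (z \in H m) = red K K z && (ht z < m)%N.
Proof.
apply/flatten_mapP/idP.
- case=> j; rewrite mem_iota /= => hj /flatten_mapP [r]; rewrite mem_iota /= => hr hz.
  have hj' : (j <= n)%N by rewrite -ltnS.
  have [h1 h2 h3] := cls_props hj' hz.
  rewrite h1 /ht h2 h3. lia.
- case/andP => hz hm. exists (lcp z w).
    rewrite mem_iota /=. have := lcp_le z w; lia.
  apply/flatten_mapP. exists (ht z); first by rewrite mem_iota.
  exact: cls_complete.
Qed.

Lemma uniq_H m : uniq (H m).
Proof.
apply: mem_flatten_uniq; first exact: iota_uniq.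
- move=> j hj.
  have hj' : (j <= n)%N by move: hj; rewrite mem_iota.
  apply: mem_flatten_uniq; first exact: iota_uniq.
  + have e : size (take j w) = j.
      rewrite size_take; case: (ltnP j n) => // hh.
      by apply/eqP; rewrite eqn_leq hh hj'.
    move=> r _. rewrite map_inj_uniq ?uniq_ext //. move=> ? ? /(congr1 (drop j)).
    by rewrite !drop_size_cat.
  + move=> r r' z _ _ h1 h2.
    have [_ e1 _] := cls_props hj' h1. have [_ e2 _] := cls_props hj' h2. lia.
- move=> j j' z hj hj' /flatten_mapP [r _ h1] /flatten_mapP [r' _ h2].
  have hj1 : (j <= n)%N by move: hj; rewrite mem_iota.
  have hj2 : (j' <= n)%N by move: hj'; rewrite mem_iota.
  have [_ _ e1] := cls_props hj1 h1. have [_ _ e2] := cls_props hj2 h2. lia.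
Qed.



End W3.

Local Open Scope ring_scope.
Local Open Scope complex_scope.

Section An.
Variable R : realType.
Local Notation C := R[i].

Definition nc (z : C) : R := Num.sqrt (complex.Re z ^+ 2 + complex.Im z ^+ 2).

Lemma ncE z : `|z| = (nc z)%:C.
Proof. exact: normc_def. Qed.

Lemma nc_ge0 z : 0 <= nc z. Proof. exact: sqrtr_ge0. Qed.

Lemma ncM x y : nc (x * y) = nc x * nc y.
Proof. apply: complexI. by rewrite rmorphM /= -!ncE normrM. Qed.

Lemma ncD x y : nc (x + y) <= nc x + nc y.
Proof. rewrite -lecR rmorphD /= -!ncE. exact: ler_normD. Qed.

Lemma ncN x : nc (- x) = nc x.
Proof. apply: complexI. by rewrite -!ncE normrN. Qed.

Lemma ncB x y : nc (x - y) <= nc x + nc y.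
Proof. by rewrite -(ncN y) ncD. Qed.

Lemma nc_real (x : R) : nc x%:C = `|x|.
Proof. by rewrite /nc /= expr0n addr0 sqrtr_sqr. Qed.

Lemma nc_i : nc 'i = 1.
Proof. by rewrite /nc /= expr0n add0r expr1n sqrtr1. Qed.

Lemma nc_nat (k : nat) : nc k%:R = k%:R.
Proof.
have -> : (k%:R : C) = (k%:R : R)%:C by rewrite rmorph_nat.
by rewrite nc_real ger0_norm.
Qed.

Lemma Re_le z : `|complex.Re z| <= nc z.
Proof.
rewrite -sqrtr_sqr /nc ler_sqrt; last by rewrite addr_ge0 // sqr_ge0.
by rewrite lerDl sqr_ge0.
Qed.

Lemma Im_le z : `|complex.Im z| <= nc z.
Proof.
rewrite -sqrtr_sqr /nc ler_sqrt; last by rewrite addr_ge0 // sqr_ge0.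
by rewrite lerDr sqr_ge0.
Qed.

Lemma nc_sum (I : Type) (s : seq I) (F : I -> C) :
  nc (\sum_(i <- s) F i) <= \sum_(i <- s) nc (F i).
Proof.
elim: s => [|a s IH]; first by rewrite !big_nil /nc /= expr0n addr0 sqrtr0.
rewrite !big_cons. apply: le_trans (ncD _ _) _. by rewrite lerD2l.
Qed.

Lemma ReD (x y : C) : complex.Re (x + y) = complex.Re x + complex.Re y.
Proof. by case: x; case: y. Qed.
Lemma ImD (x y : C) : complex.Im (x + y) = complex.Im x + complex.Im y.
Proof. by case: x; case: y. Qed.

Lemma Re_sum (s : seq nat) (F : nat -> C) :
  complex.Re (\sum_(i <- s) F i) = \sum_(i <- s) complex.Re (F i).
Proof. elim: s => [|a s IH]; first by rewrite !big_nil. by rewrite !big_cons ReD IH. Qed.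
Lemma Im_sum (s : seq nat) (F : nat -> C) :
  complex.Im (\sum_(i <- s) F i) = \sum_(i <- s) complex.Im (F i).
Proof. elim: s => [|a s IH]; first by rewrite !big_nil. by rewrite !big_cons ImD IH. Qed.

Definition limR (a : nat -> R) : R := sup (fun x => exists m, a m = x).

Lemma mono_le (a : nat -> R) : (forall m, a m <= a m.+1) ->
  forall m M, (m <= M)%N -> a m <= a M.
Proof.
move=> h m M /subnK <-. elim: (M - m)%N => [|k IH]; first by rewrite add0n.
by apply: le_trans IH _; rewrite addSn.
Qed.

Lemma mono_lim (a : nat -> R) B : (forall m, a m <= a m.+1) -> (forall m, a m <= B) ->
  forall e, 0 < e -> exists N, forall m, (N <= m)%N -> `|a m - limR a| < e.
Proof.
move=> hm hB e he.
have hs : has_sup (fun x => exists m, a m = x).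
  split; first by exists (a 0%N), 0%N.
  exists B => x [m <-]. exact: hB.
have [x [N <-] hN] := sup_adherent he hs.
exists N => m hNm.
have h1 : a m <= limR a by apply: sup_upper_bound => //; exists m.
have h2 := mono_le hm hNm.
rewrite ler0_norm ?subr_le0 // opprB. rewrite /limR in h1 *. lra.
Qed.

Definition rlim (u : nat -> R) : R :=
  (limR (fun m => \sum_(0 <= l < m) (`|u l| + u l))
   - limR (fun m => \sum_(0 <= l < m) (`|u l| - u l))) / 2.

Lemma rser_cvg (u : nat -> R) B : (forall m, \sum_(0 <= l < m) `|u l| <= B) ->
  forall e, 0 < e -> exists N, forall m, (N <= m)%N ->
  `|\sum_(0 <= l < m) u l - rlim u| < e.
Proof.
move=> hB e he.
set P := fun m => \sum_(0 <= l < m) (`|u l| + u l).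
set Q := fun m => \sum_(0 <= l < m) (`|u l| - u l).
have hP1 : forall m, P m <= P m.+1.
  move=> m. rewrite /P big_nat_recr //= lerDl. by rewrite -lerBlDr sub0r ler_normr lexx orbT.
have hQ1 : forall m, Q m <= Q m.+1.
  move=> m. rewrite /Q big_nat_recr //= lerDl subr_ge0 ler_norm //.
have hP2 : forall m, P m <= B *+ 2.
  move=> m. rewrite /P big_split /= mulr2n. apply: lerD => //.
  apply: le_trans (hB m). apply: ler_sum => l _. exact: ler_norm.
have hQ2 : forall m, Q m <= B *+ 2.
  move=> m. rewrite /Q big_split /= mulr2n. apply: lerD => //.
  apply: le_trans (hB m). rewrite sumrN. rewrite -sumrN. apply: ler_sum => l _.
  by rewrite -normrN ler_norm.
have he2 : 0 < e by [].
have [N1 h1] := mono_lim hP1 hP2 he.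
have [N2 h2] := mono_lim hQ1 hQ2 he.
exists (maxn N1 N2) => m hm.
have hm1 : (N1 <= m)%N by apply: leq_trans hm; exact: leq_maxl.
have hm2 : (N2 <= m)%N by apply: leq_trans hm; exact: leq_maxr.
have eS : \sum_(0 <= l < m) u l = (P m - Q m) / 2.
  rewrite /P /Q -sumrB. rewrite mulr_suml. apply: eq_bigr => l _. by field.
rewrite eS /rlim -/P -/Q.
have := h1 m hm1. have := h2 m hm2.
set x := P m - limR P. set y := Q m - limR Q.
have -> : (P m - Q m) / 2 - (limR P - limR Q) / 2 = (x - y) / 2 by rewrite /x /y; field.
move=> hy hx. rewrite normrM [`|2^-1|]ger0_norm; last by rewrite invr_ge0 ler0n.
have := ler_normB x y. move: hx hy. set X := `|x|. set Y := `|y|. set Z := `|x - y|.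
move=> hx hy hz. lra.
Qed.

Definition conv (a : nat -> C) (L : C) :=
  forall e : R, 0 < e -> exists N, forall m, (N <= m)%N -> nc (a m - L) < e.

Definition clim (u : nat -> C) : C :=
  (rlim (fun l => complex.Re (u l)))%:C + 'i * (rlim (fun l => complex.Im (u l)))%:C.

Lemma cser_cvg (u : nat -> C) B : (forall m, \sum_(0 <= l < m) nc (u l) <= B) ->
  conv (fun m => \sum_(0 <= l < m) u l) (clim u).
Proof.
move=> hB e he.
have hR : forall m, \sum_(0 <= l < m) `|complex.Re (u l)| <= B.
  move=> m; apply: le_trans (hB m). apply: ler_sum => l _. exact: Re_le.
have hI : forall m, \sum_(0 <= l < m) `|complex.Im (u l)| <= B.
  move=> m; apply: le_trans (hB m). apply: ler_sum => l _. exact: Im_le.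
have he2 : 0 < e / 2 by rewrite divr_gt0.
have [N1 h1] := rser_cvg hR he2.
have [N2 h2] := rser_cvg hI he2.
exists (maxn N1 N2) => m hm.
have hm1 : (N1 <= m)%N by apply: leq_trans hm; exact: leq_maxl.
have hm2 : (N2 <= m)%N by apply: leq_trans hm; exact: leq_maxr.
set S := \sum_(0 <= l < m) u l.
have eS : S - clim u = (complex.Re S - rlim (fun l => complex.Re (u l)))%:C
   + 'i * (complex.Im S - rlim (fun l => complex.Im (u l)))%:C.
  rewrite {1}[S]complexE /clim !rmorphB /=. by rewrite mulrBr opprD addrACA.
rewrite eS. apply: le_lt_trans (ncD _ _) _. rewrite ncM nc_i mul1r !nc_real.
rewrite /S Re_sum Im_sum.
have := h1 m hm1. have := h2 m hm2. move=> a b.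
have -> : e = e / 2 + e / 2 by field.
exact: ltrD.
Qed.

Lemma series_toE (u : nat -> C) s :
  conv (fun m => \sum_(0 <= l < m) u l) s ->
  forall e : R, 0 < e -> exists N : nat, forall m : nat, (N <= m)%N ->
    `| \sum_(0 <= l < m) u l - s | < (e%:C)%C.
Proof.
move=> h e he. have [N hN] := h e he. exists N => m hm.
by rewrite ncE ltcR hN.
Qed.


Lemma conv_ext (a b : nat -> C) L : (forall m, a m = b m) -> conv a L -> conv b L.
Proof. move=> e h eps he. have [N hN] := h eps he. exists N => m hm. rewrite -e. exact: hN. Qed.

Lemma conv_const (c : C) : conv (fun _ => c) c.
Proof. move=> e he. exists 0%N => m _. by rewrite subrr /nc /= expr0n addr0 sqrtr0. Qed.

Lemma conv_add (a b : nat -> C) L L' : conv a L -> conv b L' ->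
  conv (fun m => a m + b m) (L + L').
Proof.
move=> ha hb e he.
have he2 : 0 < e / 2 by rewrite divr_gt0.
have [N1 h1] := ha _ he2. have [N2 h2] := hb _ he2.
exists (maxn N1 N2) => m hm.
have hm1 : (N1 <= m)%N by apply: leq_trans hm; exact: leq_maxl.
have hm2 : (N2 <= m)%N by apply: leq_trans hm; exact: leq_maxr.
have -> : a m + b m - (L + L') = (a m - L) + (b m - L') by rewrite opprD addrACA.
apply: le_lt_trans (ncD _ _) _.
have -> : e = e / 2 + e / 2 by field.
exact: ltrD (h1 _ hm1) (h2 _ hm2).
Qed.

Lemma conv_sum (s : seq nat) (a : nat -> nat -> C) (L : nat -> C) :
  (forall i, i \in s -> conv (a i) (L i)) ->
  conv (fun m => \sum_(i <- s) a i m) (\sum_(i <- s) L i).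
Proof.
elim: s => [|x s IH] h.
  apply: (@conv_ext (fun _ => 0)); first by move=> m; rewrite big_nil.
  rewrite big_nil. exact: conv_const.
apply: (@conv_ext (fun m => a x m + \sum_(i <- s) a i m)); first by move=> m; rewrite big_cons.
rewrite big_cons. apply: conv_add; first by apply: h; rewrite mem_head.
apply: IH => i hi. apply: h. by rewrite in_cons hi orbT.
Qed.

Lemma conv_S (a : nat -> C) L : conv a L -> conv (fun m => a m.+1) L.
Proof. move=> h e he. have [N hN] := h e he. exists N => m hm. apply: hN. exact: leqW. Qed.

Lemma conv_unS (a : nat -> C) L : conv (fun m => a m.+1) L -> conv a L.
Proof.
move=> h e he. have [N hN] := h e he. exists N.+1 => m hm.
case: m hm => [|m] // hm. exact: hN.
Qed.

End An.

Lemma sum_const (V : nmodType) (T : Type) (s : seq T) (x : V) :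
  \sum_(i <- s) x = x *+ size s.
Proof. elim: s => [|a s IH]; first by rewrite big_nil. by rewrite big_cons IH mulrS. Qed.

Lemma sub_sum (R : realType) (T : eqType) (s t : seq T) (f : T -> R) :
  uniq s -> uniq t -> {subset s <= t} -> (forall x, 0 <= f x) ->
  \sum_(x <- s) f x <= \sum_(x <- t) f x.
Proof.
move=> us ut st f0.
rewrite [X in _ <= X](bigID (fun x => x \in s)) /=.
have -> : \sum_(i <- t | i \in s) f i = \sum_(i <- s) f i.
  rewrite -big_filter. apply: perm_big. apply: uniq_perm.
  - exact: filter_uniq.
  - exact: us.
  - move=> x. rewrite mem_filter. apply/andP/idP => [[]//|hx]. by rewrite hx st.
rewrite lerDl. apply: sumr_ge0 => x _. exact: f0.
Qed.

Lemma le_sum_mem (R : realType) (T : eqType) (s : seq T) (f : T -> R) x :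
  x \in s -> (forall y, 0 <= f y) -> f x <= \sum_(y <- s) f y.
Proof.
move=> hx f0. rewrite (big_rem x hx) /= lerDl. apply: sumr_ge0 => y _. exact: f0.
Qed.

Section Main.
Variable R : realType.
Local Notation C := R[i].
Variable kappa : nat.
Hypothesis hk : (1 <= kappa)%N.
Local Notation K := kappa.+1.
Variable w : seq nat.
Hypothesis hw : red K K w.
Local Notation n := (size w).
Variables a1 a2 : nat -> C.
Variables M1 M2 : R.
Hypothesis hb1 : forall Z, uniq Z -> all (red K K) Z ->
  \sum_(z <- Z) nc (a1 (size z)) ^+ 2 <= M1.
Hypothesis hb2 : forall Z, uniq Z -> all (red K K) Z ->
  \sum_(z <- Z) nc (a2 (wd z w)) ^+ 2 <= M2.

Definition G z := a1 (size z) * a2 (wd z w).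
Definition vl j r := a1 (j + r)%N * a2 (n - j + r)%N.
Definition cnt j r := size (ext K (lastp K w j) (cw K w j) r).
Definition Q m := \sum_(0 <= j < n.+1) \sum_(0 <= r < m) (cnt j r)%:R * vl j r.
Definition P m := \sum_(0 <= j < n.+1) \sum_(0 <= r < m) (cnt j r)%:R * nc (vl j r).

Lemma sum_H (V : nmodType) (f : seq nat -> V) m :
  \sum_(z <- H K w m) f z = \sum_(0 <= j < n.+1) \sum_(0 <= r < m)
     \sum_(y <- ext K (lastp K w j) (cw K w j) r) f (take j w ++ y).
Proof.
rewrite /H big_flatten big_map /index_iota !subn0. apply: eq_bigr => j _.
rewrite /Hj big_flatten big_map. apply: eq_bigr => r _. by rewrite /cls big_map.
Qed.

Lemma G_cls j r y : (j <= n)%N -> y \in ext K (lastp K w j) (cw K w j) r ->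
  G (take j w ++ y) = vl j r.
Proof.
move=> hj hy.
have hz : take j w ++ y \in cls K w j r by apply: map_f.
have [_ h2 h3] := cls_props hw hj hz.
rewrite /G /vl /wd h2 h3. congr (_ * a2 _). lia.
Qed.

Lemma QH m : \sum_(z <- H K w m) G z = Q m.
Proof.
rewrite sum_H. apply: eq_big_nat => j /andP [_ hj]. apply: eq_bigr => r _.
rewrite (eq_big_seq (fun _ => vl j r)); first by rewrite sum_const mulr_natl.
move=> y hy. exact: G_cls.
Qed.

Lemma PH m : \sum_(z <- H K w m) nc (G z) = P m.
Proof.
rewrite sum_H. apply: eq_big_nat => j /andP [_ hj]. apply: eq_bigr => r _.
rewrite (eq_big_seq (fun _ => nc (vl j r))); first by rewrite sum_const mulr_natl.
move=> y hy. by rewrite (G_cls hj hy).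
Qed.

Lemma all_H m : all (red K K) (H K w m).
Proof. apply/allP => z. by rewrite (mem_H hw) => /andP []. Qed.

Definition BB := (M1 + M2) / 2.

Lemma P_bound m : P m <= BB.
Proof.
rewrite -PH.
apply: le_trans (_ : \sum_(z <- H K w m) (nc (a1 (size z)) ^+ 2 + nc (a2 (wd z w)) ^+ 2) / 2 <= _).
  apply: ler_sum => z _. rewrite /G ncM.
  have h1 := nc_ge0 (a1 (size z)). have h2 := nc_ge0 (a2 (wd z w)).
  set x := nc _ in h1 *. set y := nc _ in h2 *.
  have h := sqr_ge0 (x - y). rewrite sqrrB in h. lra.
rewrite /BB -mulr_suml big_split /=. rewrite ler_pM2r ?invr_gt0 ?ltr0n //.
apply: lerD; [apply: hb1 | apply: hb2]; rewrite ?uniq_H ?all_H //.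
Qed.

Lemma P_mono m : P m <= P m.+1.
Proof.
apply: ler_sum => j _. rewrite big_nat_recr //= lerDl.
by rewrite mulr_ge0 ?ler0n ?nc_ge0.
Qed.

Lemma P_ge0 m : 0 <= P m.
Proof. apply: sumr_ge0 => j _; apply: sumr_ge0 => r _. by rewrite mulr_ge0 ?ler0n ?nc_ge0. Qed.

Lemma sumH_split (V : nmodType) (f : seq nat -> V) (Fs : seq (seq nat)) m :
  uniq Fs -> all (red K K) Fs -> {subset H K w m <= Fs} ->
  \sum_(z <- Fs | (ht w z < m)%N) f z = \sum_(z <- H K w m) f z.
Proof.
move=> uF aF sF. rewrite -big_filter. apply: perm_big. apply: uniq_perm.
- exact: filter_uniq.
- exact: uniq_H.
- move=> z. rewrite mem_filter (mem_H hw). apply/andP/andP => [[h1 h2]|[h1 h2]].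
  + split=> //. exact: (allP aF).
  + split=> //. apply: sF. by rewrite (mem_H hw) h1 h2.
Qed.

Lemma usumW T : conv Q T -> forall e : R, 0 < e -> exists F0 : seq (seq nat),
  all (red K K) F0 /\ forall Fs, uniq Fs -> all (red K K) Fs -> {subset F0 <= Fs} ->
  nc (\sum_(z <- Fs) G z - T) < e.
Proof.
move=> hQ e he.
have he4 : 0 < e / 4 by rewrite divr_gt0.
have he2 : 0 < e / 2 by rewrite divr_gt0.
have [N1 h1] := mono_lim P_mono P_bound he4.
have [N2 h2] := hQ _ he2.
exists (H K w (maxn N1 N2)). split; first exact: all_H.
set m := maxn N1 N2.
move=> Fs uF aF sF.
set M := (m + (\sum_(z <- Fs) size z).+1)%N.
have hM : {subset Fs <= H K w M}.
  move=> z hz. rewrite (mem_H hw) (allP aF z hz) /= /ht.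
  have : (size z <= \sum_(x <- Fs) size x)%N.
    rewrite (big_rem z hz) /=. exact: leq_addr.
  move=> h. apply: leq_ltn_trans (leq_subr _ _) _.
  apply: leq_trans (leq_addl m _). by rewrite ltnS.
have hmM : (m <= M)%N by rewrite /M leq_addr.
have sHH : {subset H K w m <= H K w M}.
  move=> z. rewrite !(mem_H hw) => /andP [-> h] /=. exact: leq_trans h hmM.
rewrite (bigID (fun z => ht w z < m)%N) /= (sumH_split _ uF aF sF) QH.
set X := \sum_(i <- Fs | ~~ (ht w i < m)%N) G i.
have hX : nc X <= P M - P m.
  rewrite /X -big_filter. apply: le_trans (nc_sum _ _) _.
  apply: le_trans (_ : \sum_(z <- [seq z <- H K w M | ~~ (ht w z < m)%N]) nc (G z) <= _).
    apply: sub_sum.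
    - exact: filter_uniq.
    - apply: filter_uniq. exact: uniq_H.
    - move=> z. rewrite !mem_filter => /andP [-> hz] /=. exact: hM.
    - move=> z; exact: nc_ge0.
  rewrite big_filter -!PH.
  rewrite [X in _ <= X - _](bigID (fun z => ht w z < m)%N) /=.
  rewrite (sumH_split _ (uniq_H hw M) (all_H M) sHH). rewrite addrC addrK //.
have hm1 : (N1 <= m)%N by exact: leq_maxl.
have hm2 : (N2 <= m)%N by exact: leq_maxr.
have hmM1 : (N1 <= M)%N by exact: leq_trans hmM.
have a := h1 _ hm1. have b := h1 _ hmM1. have c := h2 _ hm2.
have := ler_normB (P M - limR P) (P m - limR P).
rewrite opprB addrA subrK. 
have -> : Q m + X - T = (Q m - T) + X by rewrite addrAC.
move=> hd. apply: le_lt_trans (ncD _ _) _.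
have hPP : P M - P m <= `|P M - P m| by exact: ler_norm.
set u := `|P M - P m| in hd hPP.
set v := `|P M - limR P| in b hd. set v' := `|P m - limR P| in a hd.
set cq := nc (Q m - T) in c *. set cx := nc X in hX *.
have -> : e = e / 2 + e / 4 + e / 4 by field.
lra.
Qed.


Lemma ncnat (k : nat) (z : C) : nc (k%:R * z) = k%:R * nc z.
Proof. by rewrite ncM nc_nat. Qed.

Lemma cnt_0 j : cnt j 0 = 1%N. Proof. by []. Qed.

Lemma split_n (V : nmodType) (F : nat -> V) : (0 < n)%N ->
  \sum_(0 <= j < n.+1) F j = F 0%N + F n + \sum_(1 <= j < n) F j.
Proof.
move=> hn. rewrite big_ltn // big_nat_recr //=. by rewrite addrA [_ + F n]addrC addrA [F n + _]addrC.
Qed.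

Lemma comp_bound j m : (j <= n)%N ->
  \sum_(0 <= r < m) (cnt j r)%:R * nc (vl j r) <= BB.
Proof.
move=> hj. apply: le_trans (P_bound m). rewrite /P.
apply: (le_sum_mem (f := fun j => \sum_(0 <= r < m) (cnt j r)%:R * nc (vl j r))).
  by rewrite mem_index_iota.
move=> y. apply: sumr_ge0 => r _. by rewrite mulr_ge0 ?ler0n ?nc_ge0.
Qed.

Lemma comp_bound_S j m : (j <= n)%N ->
  \sum_(0 <= l < m) nc ((cnt j l.+1)%:R * vl j l.+1) <= BB.
Proof.
move=> hj. apply: le_trans (comp_bound m.+1 hj). rewrite big_nat_recl //.
rewrite -[X in X <= _]add0r. apply: lerD; first by rewrite mulr_ge0 ?ler0n ?nc_ge0.
apply: ler_sum => l _. by rewrite ncnat.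
Qed.


Lemma cnt_S j r : cnt j r.+1 = (size (letters K (lastp K w j) (cw K w j)) * kappa ^ r)%N.
Proof. by rewrite /cnt size_extS. Qed.

Lemma lett_nil : n = 0%N -> size (letters K (lastp K w 0) (cw K w 0)) = K.
Proof.
move=> hn. have -> : cw K w 0 = K by rewrite /cw nth_default // hn.
by rewrite size_letters /= ltnn /= !subn0.
Qed.

Lemma lett_first : (0 < n)%N -> size (letters K (lastp K w 0) (cw K w 0)) = kappa.
Proof.
move=> hn. have hc := nth_red_lt hw hn. rewrite size_letters /= ltnn subn0 /cw hc /=.
by rewrite neq_ltn hc /= subn1.
Qed.

Lemma lett_last : (0 < n)%N -> size (letters K (lastp K w n) (cw K w n)) = kappa.
Proof.
move=> hn. have -> : cw K w n = K by rewrite /cw nth_default.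
case en : n hn => [|n'] // _. rewrite /lastp.
have hc : (nth K w n' < K)%N by apply: (nth_red_lt hw); rewrite en.
by rewrite size_letters hc ltnn /= subn0 subn1.
Qed.

Lemma lett_mid j : (0 < j)%N -> (j < n)%N ->
  size (letters K (lastp K w j) (cw K w j)) = (kappa - 1)%N.
Proof.
case: j => [|j] // _ hj. rewrite /lastp /cw.
have h1 : (nth K w j < K)%N by apply: (nth_red_lt hw); exact: ltnW.
have h2 : (nth K w j.+1 < K)%N by exact: (nth_red_lt hw).
have h3 := nth_red_neq hw hj.
rewrite size_letters h1 h2 h3 /=. lia.
Qed.

Lemma cntC_first r : (0 < n)%N -> (cnt 0 r)%:R = kappa%:R ^+ r :> C.
Proof.
move=> hn. case: r => [|r]; first by rewrite cnt_0 expr0.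
by rewrite cnt_S lett_first // natrM natrX exprS.
Qed.

Lemma cntC_last r : (0 < n)%N -> (cnt n r)%:R = kappa%:R ^+ r :> C.
Proof.
move=> hn. case: r => [|r]; first by rewrite cnt_0 expr0.
by rewrite cnt_S lett_last // natrM natrX exprS.
Qed.

Lemma cntC_mid j r : (0 < j)%N -> (j < n)%N ->
  (cnt j r.+1)%:R = (kappa%:R - 1) * kappa%:R ^+ r :> C.
Proof. move=> h1 h2. by rewrite cnt_S lett_mid // natrM natrX natrB. Qed.

Lemma cntC_nil r : n = 0%N -> (cnt 0 r.+1)%:R = K%:R * kappa%:R ^+ r :> C.
Proof. move=> hn. by rewrite cnt_S lett_nil // natrM natrX. Qed.

Definition un r := (cnt 0 r)%:R * vl 0 r + (cnt n r)%:R * vl n r.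
Definition tt i l := (cnt i l.+1)%:R * vl i l.+1.

Lemma Q_dec m : (0 < n)%N -> Q m.+1 = \sum_(0 <= r < m.+1) un r +
  \sum_(1 <= i < n) (vl i 0 + \sum_(0 <= l < m) tt i l).
Proof.
move=> hn. rewrite /Q split_n // -big_split /=. congr (_ + _).
apply: eq_bigr => i _. by rewrite big_nat_recl // cnt_0 mul1r.
Qed.

Lemma un_bound m : (0 < n)%N -> \sum_(0 <= r < m) nc (un r) <= BB.
Proof.
move=> hn. apply: le_trans (P_bound m).
apply: le_trans (_ : \sum_(0 <= r < m) ((cnt 0 r)%:R * nc (vl 0 r) + (cnt n r)%:R * nc (vl n r)) <= _).
  apply: ler_sum => r _. apply: le_trans (ncD _ _) _. by rewrite !ncnat.
rewrite /P split_n // big_split /= lerDl.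
apply: sumr_ge0 => j _; apply: sumr_ge0 => r _. by rewrite mulr_ge0 ?ler0n ?nc_ge0.
Qed.

Lemma tt_conv i : (i <= n)%N -> conv (fun m => \sum_(0 <= l < m) tt i l) (clim (tt i)).
Proof. move=> hi. apply: cser_cvg. move=> m. exact: comp_bound_S. Qed.

Lemma un_conv : (0 < n)%N -> conv (fun m => \sum_(0 <= l < m) un l) (clim un).
Proof. move=> hn. apply: cser_cvg. move=> m. exact: un_bound. Qed.

Lemma Q_conv : (0 < n)%N ->
  conv Q (clim un + \sum_(1 <= i < n) vl i 0 + \sum_(1 <= i < n) clim (tt i)).
Proof.
move=> hn. apply: conv_unS.
apply: (conv_ext (fun m => esym (Q_dec m hn))).
rewrite -addrA. apply: conv_add; first exact: (conv_S (un_conv hn)).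
apply: (@conv_ext _ (fun m => \sum_(1 <= i < n) vl i 0 + \sum_(1 <= i < n) \sum_(0 <= l < m) tt i l)).
  move=> m. by rewrite big_split.
apply: conv_add; first exact: conv_const.
apply: conv_sum => i. rewrite mem_index_iota => /andP [_ hi]. apply: tt_conv. exact: ltnW.
Qed.

Lemma Q_dec0 m : n = 0%N -> Q m.+1 = vl 0 0 + \sum_(0 <= l < m) tt 0 l.
Proof. move=> hn. rewrite /Q hn big_nat1 big_nat_recl // cnt_0 mul1r. by []. Qed.

Lemma Q_conv0 : n = 0%N -> conv Q (vl 0 0 + clim (tt 0)).
Proof.
move=> hn. apply: conv_unS.
apply: (conv_ext (fun m => esym (Q_dec0 m hn))).
apply: conv_add; first exact: conv_const.
apply: tt_conv. by [].
Qed.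

End Main.

Section Fin.
Variable R : realType.
Local Notation C := R[i].

Lemma inA_row kappa (al : nat -> C) : in_A kappa al -> exists M : R,
  forall S' : seq (vertex kappa), uniq S' -> forall y0,
  \sum_(x <- S') nc (al (tdist x y0)) ^+ 2 <= M.
Proof.
case=> M hM. exists M => S' uS y0.
have u1 : uniq [:: y0] by [].
have := hM [:: y0] S' (fun _ => 1) u1 uS.
rewrite big_seq1 normr1 expr1n mulr1.
rewrite (eq_bigr (fun x => ((nc (al (tdist x y0))) ^+ 2)%:C)); last first.
  move=> x _. by rewrite big_seq1 mulr1 ncE rmorphXn.
by rewrite -rmorph_sum lecR.
Qed.

Lemma has_usum_ext kappa (F F' : vertex kappa -> C) s :
  (forall x, F x = F' x) -> has_usum F s -> has_usum F' s.
Proof.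
move=> e h eps he. have [F0 hF0] := h eps he. exists F0 => Fs uF sF.
rewrite -(eq_bigr _ (fun x _ => e x)). exact: hF0.
Qed.

Lemma transfer kappa (v0 : vertex kappa) (Gf : seq nat -> C) (T : C) :
  (forall e : R, 0 < e -> exists F0, all (red kappa.+1 kappa.+1) F0 /\
     forall Fs, uniq Fs -> all (red kappa.+1 kappa.+1) Fs -> {subset F0 <= Fs} ->
     nc (\sum_(z <- Fs) Gf z - T) < e) ->
  has_usum (fun x => Gf (phi v0 x)) T.
Proof.
move=> h e he. have [F0 [aF0 hF0]] := h e he. exists (map (psi v0) F0) => Fs uFs sFs.
rewrite ncE ltcR -(big_map (phi v0) xpredT Gf). apply: hF0.
- rewrite map_inj_uniq //. exact: phi_inj.
- apply/allP => z /mapP [x _ ->]. exact: red_phi.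
- move=> z hz. rewrite -(phi_psi v0 (allP aF0 z hz)). apply: map_f. apply: sFs. exact: map_f.
Qed.

Lemma bound_W kappa (v0 y0 : vertex kappa) (al : nat -> C) (M : R)
  (hM : forall S' : seq (vertex kappa), uniq S' -> forall y,
     \sum_(x <- S') nc (al (tdist x y)) ^+ 2 <= M)
  (f : seq nat -> nat)
  (hf : forall z, red kappa.+1 kappa.+1 z -> tdist (psi v0 z) y0 = f z) :
  forall Z, uniq Z -> all (red kappa.+1 kappa.+1) Z ->
  \sum_(z <- Z) nc (al (f z)) ^+ 2 <= M.
Proof.
move=> Z uZ aZ.
have uM : uniq (map (psi v0) Z).
  rewrite (map_inj_in_uniq) //. move=> x y hx hy e.
  by rewrite -(phi_psi v0 (allP aZ x hx)) -(phi_psi v0 (allP aZ y hy)) e.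
have := hM _ uM y0. rewrite big_map.
rewrite (eq_big_seq (fun z => nc (al (f z)) ^+ 2)) //.
move=> z hz. by rewrite hf // (allP aZ z hz).
Qed.

End Fin.

Local Close Scope complex_scope.

Theorem lemma2p1 (R : realType) (kappa : nat) (hk : (1 <= kappa)%N)
  (alpha1 alpha2 : nat -> R[i])
  (h1 : in_A kappa alpha1) (h2 : in_A kappa alpha2)
  (v : nat -> vertex kappa)
  (hv : forall k n : nat, tdist (v k) (v n) = `|(k%:Z - n%:Z)%R|%N) :
  (* n = 0 *)
  (exists s : R[i],
     series_to (fun l => (kappa.+1)%:R * (kappa%:R) ^+ l
                         * alpha1 l.+1 * alpha2 l.+1) s /\
     has_usum (fun x => alpha1 (tdist (v 0%N) x) * alpha2 (tdist x (v 0%N)))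
       (alpha1 0%N * alpha2 0%N + s))
  /\
  (* n = 1 *)
  (exists s : R[i],
     series_to (fun l => (kappa%:R) ^+ l
                  * (alpha1 l * alpha2 l.+1 + alpha1 l.+1 * alpha2 l)) s /\
     has_usum (fun x => alpha1 (tdist (v 0%N) x) * alpha2 (tdist x (v 1%N))) s)
  /\
  (* n >= 2 *)
  (forall n : nat, (2 <= n)%N ->
   exists (s : R[i]) (t : nat -> R[i]),
     series_to (fun l => (kappa%:R) ^+ l
                  * (alpha1 l * alpha2 (l + n)%N + alpha1 (l + n)%N * alpha2 l)) s /\
     (forall i : nat, (1 <= i <= n.-1)%N ->
        series_to (fun l => (kappa%:R - 1) * (kappa%:R) ^+ l
                     * alpha1 (l.+1 + i)%N * alpha2 (l.+1 + n - i)%N) (t i)) /\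
     has_usum (fun x => alpha1 (tdist (v 0%N) x) * alpha2 (tdist x (v n)))
       (s + \sum_(1 <= i < n) alpha1 i * alpha2 (n - i)%N
          + \sum_(1 <= i < n) t i)).
Proof.
have [M1 hM1] := inA_row h1. have [M2 hM2] := inA_row h2.
pose v0 := v 0%N.
pose W n := phi v0 (v n).
have Hw : forall n, red kappa.+1 kappa.+1 (W n) by move=> n; exact: red_phi.
have Hs : forall n, size (W n) = n.
  move=> n. by rewrite /W size_phi /v0 hv sub0r abszN.
have HB1 : forall Z, uniq Z -> all (red kappa.+1 kappa.+1) Z ->
    \sum_(z <- Z) nc (alpha1 (size z)) ^+ 2 <= M1.
  apply: (bound_W (v0 := v0) (y0 := v0) hM1).
  move=> z hz. by rewrite (tdist_phi v0) (phi_psi v0 hz) -/v0 phi_v0 /wd lcp_nil /= addn0 muln0 subn0.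
have HB2 : forall n Z, uniq Z -> all (red kappa.+1 kappa.+1) Z ->
    \sum_(z <- Z) nc (alpha2 (wd z (W n))) ^+ 2 <= M2.
  move=> n. apply: (bound_W (v0 := v0) (y0 := v n) hM2).
  move=> z hz. by rewrite (tdist_phi v0) (phi_psi v0 hz).
have Hu : forall n T, conv (Q kappa (W n) alpha1 alpha2) T ->
    has_usum (fun x => alpha1 (tdist (v 0%N) x) * alpha2 (tdist x (v n))) T.
  move=> n T hQ.
  apply: (@has_usum_ext _ _ (fun x => G (W n) alpha1 alpha2 (phi v0 x))).
    move=> x. by rewrite /G size_phi (tdist_phi v0 x (v n)).
  apply: transfer => e he.
  exact: (usumW hk (Hw n) HB1 (HB2 n) hQ he).
split; [|split].
-
  have hs := Hs 0%N.
  exists (clim (tt kappa (W 0%N) alpha1 alpha2 0)). split.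
  + rewrite /series_to. apply: series_toE.
    apply: (conv_ext _ (tt_conv hk (Hw 0%N) HB1 (HB2 0%N) (leq0n _))).
    move=> m. apply: eq_bigr => l _.
    rewrite /tt (cntC_nil _ _ _ hs) /vl hs /= mulrA. by [].
  + have e : vl (W 0%N) alpha1 alpha2 0 0 = alpha1 0%N * alpha2 0%N by rewrite /vl hs.
    rewrite -e. apply: Hu. exact: (Q_conv0 hk (Hw 0%N) HB1 (HB2 0%N) hs).
-
  have hs := Hs 1%N.
  have hn : (0 < size (W 1%N))%N by rewrite hs.
  exists (clim (un kappa (W 1%N) alpha1 alpha2)). split.
  + rewrite /series_to. apply: series_toE.
    apply: (conv_ext _ (un_conv hk (Hw 1%N) HB1 (HB2 1%N) hn)).
    move=> m. apply: eq_bigr => l _.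
    rewrite /un (cntC_first _ (Hw 1%N) _ hn) (cntC_last _ (Hw 1%N) _ hn) /vl hs /=.
    rewrite subnn subn0 !add0n add1n. by rewrite mulrDr.
  + apply: Hu. move: (Q_conv hk (Hw 1%N) HB1 (HB2 1%N) hn). rewrite hs !big_geq //.
    by rewrite !addr0.
-
  move=> n hn2.
  have hs := Hs n.
  have hn : (0 < size (W n))%N by rewrite hs; exact: ltnW.
  exists (clim (un kappa (W n) alpha1 alpha2)), (fun i => clim (tt kappa (W n) alpha1 alpha2 i)).
  split; [|split].
  + rewrite /series_to. apply: series_toE.
    apply: (conv_ext _ (un_conv hk (Hw n) HB1 (HB2 n) hn)).
    move=> m. apply: eq_bigr => l _.
    rewrite /un (cntC_first _ (Hw n) _ hn) (cntC_last _ (Hw n) _ hn) /vl hs /=.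
    rewrite subnn subn0 !add0n (addnC n l). by rewrite mulrDr.
  + move=> i /andP [hi1 hi2].
    have hin : (i < n)%N by case: n hn2 hi2 {hs hn} => [|n'] //=; lia.
    rewrite /series_to. apply: series_toE.
    have hin' : (i <= size (W n))%N by rewrite hs; exact: ltnW.
    have hin'' : (i < size (W n))%N by rewrite hs.
    apply: (conv_ext _ (tt_conv hk (Hw n) HB1 (HB2 n) hin')).
    move=> m. apply: eq_bigr => l _.
    rewrite /tt (cntC_mid _ hk (Hw n) _ hi1 hin'') /vl hs.
    have -> : (n - i + l.+1 = l.+1 + n - i)%N by lia.
    by rewrite [(i + l.+1)%N]addnC !mulrA.
  + apply: Hu. move: (Q_conv hk (Hw n) HB1 (HB2 n) hn). rewrite hs.
    have -> : \sum_(1 <= i < n) vl (W n) alpha1 alpha2 i 0 = \sum_(1 <= i < n) alpha1 i * alpha2 (n - i)%N.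
      apply: eq_bigr => i _. by rewrite /vl hs !addn0.
    by [].
Qed.
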